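(* Fix integers $n\ge2$ and $1\le r\le n/2$. For every integer $2\le x\le n$, \[ q_r(x)\le\Big(1+\frac{r^x}{(n-r)^x}\Big)\Big(1-\frac xn\Big)^r \quad\text{and}\quad q_r(x)\le 1-2\frac rn\Big(1-\frac rn\Big). \] Furthermore, for any random variable $X$ with values in $\{0,\dots,n\}$, \[ \mathbb{E}q_r(X)\le 1-\frac rn\mathbb{E}X1(X\ge2)+\frac{r^2}{(n-r)^2}\mathbb{P}(X\ge2)+\frac12\frac{r^2}{n^2}\mathbb{E}X^21(X\ge2) \] and \[ \mathbb{E}q_r(X)\le\mathbb{P}(X<2)+e^{-2\frac rn(1-\frac rn)}\mathbb{P}(X\ge2). \]
   Context: For integers $1\le r\le n/2$ and $0\le x\le n$, $q_r(x)$ denotes the probability that a subset of size $x$ sampled uniformly at random from $\{1,\dots,n\}$ is either fully contained in $\{1,\dots,r\}$ or fully contained in $\{r+1,\dots,n\}$ (so $q_r(x)=1$ for $x\le1$). *)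

(* Defs.v *)
From HB Require Import structures.
From mathcomp Require Import all_boot all_order all_algebra.
From mathcomp Require Import all_classical all_reals all_analysis.
Set Implicit Arguments. Unset Strict Implicit. Unset Printing Implicit Defensive.
Import Order.TTheory GRing.Theory Num.Theory.
Local Open Scope ring_scope.

(* The ground set {1,...,n} is modelled by 'I_n = {0,...,n-1};
   {1,...,r} corresponds to the first r elements [set i | i < r]. *)
Definition lowerPart (n r : nat) : {set 'I_n} := [set i : 'I_n | (i < r)%N].
Definition upperPart (n r : nat) : {set 'I_n} := [set i : 'I_n | (r <= i)%N].

(* q_r(x): probability that a uniformly random x-subset of an n-set lies
   entirely in {1..r} or entirely in {r+1..n}. *)
Definition qr (R : realType) (n r x : nat) : R :=
  #|[set A : {set 'I_n} | (#|A| == x) &&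
       ((A \subset lowerPart n r) || (A \subset upperPart n r))]|%:R
  / #|[set A : {set 'I_n} | #|A| == x]|%:R.

(* A random variable X with values in {0,...,n} is described by its law
   p : 'I_n.+1 -> R (p i = P(X = i)). *)
Definition is_law (R : realType) (n : nat) (p : 'I_n.+1 -> R) : Prop :=
  (forall i, 0 <= p i) /\ \sum_(i < n.+1) p i = 1.

(* Main.v *)
Require Import Defs.
From HB Require Import structures.
From mathcomp Require Import all_boot all_order all_algebra.
From mathcomp Require Import all_classical all_reals all_analysis.
From mathcomp Require Import ring lra zify.
Import Order.TTheory GRing.Theory Num.Theory.
Local Open Scope ring_scope.
Lemma binC_ratio a b x : (a <= b)%N -> ('C(a,x) * b^x <= a^x * 'C(b,x))%N.
Proof.
move=> hab; elim: x => [|x IH]; first by rewrite !bin0 !expn0.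
rewrite -(leq_pmul2l (ltn0Sn x)).
have -> : (x.+1 * ('C(a,x.+1) * b^x.+1) = ((a-x)*b) * ('C(a,x)*b^x))%N.
  by rewrite mulnA mul_bin_left expnS; ring.
have -> : (x.+1 * (a^x.+1 * 'C(b,x.+1)) = (a*(b-x)) * (a^x*'C(b,x)))%N.
  by rewrite mulnCA mul_bin_left expnS; ring.
apply: leq_mul => //; nia.
Qed.

Lemma bin_mono m n x : (m <= n)%N -> ('C(m,x.+1) * 'C(n,x) <= 'C(m,x) * 'C(n,x.+1))%N.
Proof.
move=> hmn; rewrite -(leq_pmul2l (ltn0Sn x)).
have -> : (x.+1 * ('C(m,x.+1) * 'C(n,x)) = (m-x) * ('C(m,x) * 'C(n,x)))%N.
  by rewrite mulnA mul_bin_left; ring.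
have -> : (x.+1 * ('C(m,x) * 'C(n,x.+1)) = (n-x) * ('C(m,x) * 'C(n,x)))%N.
  by rewrite mulnCA mul_bin_left; ring.
apply: leq_mul => //; lia.
Qed.

Lemma bin_mono2 m n x : (m <= n)%N -> (2 <= x)%N -> (x <= n)%N ->
  ('C(m,x) * 'C(n,2) <= 'C(m,2) * 'C(n,x))%N.
Proof.
move=> hmn; elim: x => [|x IH] // h2 hxn.
case: (ltnP x 2) => hx.
  by have -> : x = 1%N by lia.
have hp : (0 < 'C(n,x))%N by rewrite bin_gt0; lia.
rewrite -(leq_pmul2r hp).
apply: (@leq_trans ('C(m,x) * 'C(n,x.+1) * 'C(n,2))).
  by rewrite mulnAC leq_mul2r bin_mono ?orbT.
rewrite mulnAC [X in (_ <= X)%N]mulnAC leq_mul2r IH ?orbT //; lia.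
Qed.

Lemma card_lower n r : (r <= n)%N -> #|lowerPart n r| = r.
Proof.
move=> hrn.
have -> : lowerPart n r = [set widen_ord hrn i | i in [set: 'I_r]].
  apply/setP => i; rewrite !inE; apply/idP/imsetP.
    by move=> hi; exists (Ordinal hi); rewrite ?inE //; apply: val_inj.
  by case=> j _ ->; rewrite /= ltn_ord.
by rewrite card_imset ?cardsT ?card_ord //; by move=> a b /(congr1 val) /= /val_inj.
Qed.

Lemma card_upper n r : (r <= n)%N -> #|upperPart n r| = (n - r)%N.
Proof.
move=> hrn.
have -> : upperPart n r = ~: lowerPart n r.
  by apply/setP => i; rewrite !inE leqNgt.
by have := cardsC (lowerPart n r); rewrite card_lower // card_ord; lia.
Qed.

Lemma qr_num_le (R : realType) n r x : (r <= n)%N ->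
  qr R n r x <= ('C(r,x) + 'C(n-r,x))%:R / 'C(n,x)%:R.
Proof.
move=> hrn; rewrite /qr card_draws card_ord.
apply: ler_wpM2r; first by rewrite invr_ge0 ler0n.
have e1 := cards_draws (lowerPart n r) x; rewrite card_lower // in e1.
have e2 := cards_draws (upperPart n r) x; rewrite card_upper // in e2.
rewrite ler_nat -e1 -e2.
apply: leq_trans (leq_card_setU _ _).
apply: subset_leq_card; apply/fintype.subsetP => A; rewrite !inE.
by case/andP => ->; case/orP => ->; rewrite ?orbT.
Qed.

Lemma qr_le1 (R : realType) n r x : qr R n r x <= 1.
Proof.
rewrite /qr card_draws card_ord.
have [->|h] := eqVneq ('C(n,x)) 0%N; first by rewrite invr0 mulr0.
rewrite ler_pdivrMr ?ltr0n ?lt0n // mul1r ler_nat -[X in 'C(X,_)]card_ord -card_draws.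
by apply: subset_leq_card; apply/fintype.subsetP => A; rewrite !inE; case/andP.
Qed.
Lemma one_sub_ge0 (R : realType) n x : (x <= n)%N -> 0 <= 1 - x%:R / n%:R :> R.
Proof.
move=> hxn; rewrite subr_ge0.
have [->|hn] := eqVneq n 0%N; first by rewrite invr0 mulr0.
by rewrite ler_pdivrMr ?ltr0n ?lt0n // mul1r ler_nat.
Qed.

Lemma ratio_upper (R : realType) n k x : (k <= n)%N -> (x <= n)%N ->
  'C(n-k,x)%:R / 'C(n,x)%:R <= (1 - x%:R/n%:R)^+k :> R.
Proof.
move=> + hxn; elim: k => [|k IH] hk.
  by rewrite subn0 expr0 divff // pnatr_eq0 -lt0n bin_gt0.
have hm : (0 < n - k)%N by lia.
have e : (n - k.+1 = (n - k).-1)%N by lia.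
have hC : ('C(n - k.+1, x)%:R : R) = (n - k - x)%:R / (n - k)%:R * 'C(n-k,x)%:R.
  rewrite e; apply: (@mulfI _ (n-k)%:R); first by rewrite pnatr_eq0 -lt0n.
  rewrite -natrM mul_bin_down natrM mulrA mulrCA divff ?mulr1 //.
  by rewrite pnatr_eq0 -lt0n.
have hr0 : 0 <= 'C(n-k,x)%:R / 'C(n,x)%:R :> R by rewrite divr_ge0 ?ler0n.
rewrite hC -mulrA exprS; apply: ler_pM => //; last by apply: IH; lia.
have [hxm|hxm] := leqP x (n - k).
  rewrite natrB // mulrBl divff ?pnatr_eq0 -?lt0n //.
  have hmn : ((n - k)%:R : R) <= n%:R by rewrite ler_nat; lia.
  have hm0 : 0 < ((n - k)%:R : R) by rewrite ltr0n.
  rewrite lerD2l lerN2; apply: ler_wpM2l => //.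
  by rewrite lef_pV2 ?posrE ?ltr0n //; lia.
have -> : (n - k - x = 0)%N by lia.
by rewrite mul0r one_sub_ge0.
Qed.

Lemma claim1 (R : realType) n r x : (2 * r <= n)%N -> (x <= n)%N -> (1 <= r)%N ->
  qr R n r x <= (1 + (r%:R ^+ x) / ((n - r)%:R ^+ x)) * (1 - x%:R / n%:R) ^+ r.
Proof.
move=> hr2 hx hr1.
have hrn : (r <= n)%N by lia.
apply: le_trans (qr_num_le _ _ _ x hrn) _.
have hD : 0 < ('C(n,x)%:R : R) by rewrite ltr0n bin_gt0.
have hN : 0 < ((n - r)%:R : R) by rewrite ltr0n; lia.
have hNx : 0 < ((n - r)%:R ^+ x : R) by rewrite exprn_gt0.
have hAB : ('C(r,x)%:R : R) <= r%:R ^+ x / (n - r)%:R ^+ x * 'C(n-r,x)%:R.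
  rewrite mulrAC ler_pdivlMr // -!natrX -!natrM ler_nat.
  apply: binC_ratio; lia.
have hP := ratio_upper R n r x hrn hx.
have hc : 0 <= r%:R ^+ x / (n - r)%:R ^+ x :> R by rewrite divr_ge0 ?exprn_ge0 ?ler0n.
rewrite natrD mulrDl.
apply: (@le_trans _ _ (r%:R ^+ x / (n - r)%:R ^+ x * ('C(n-r,x)%:R / 'C(n,x)%:R)
    + 'C(n-r,x)%:R / 'C(n,x)%:R)).
  by rewrite lerD2r mulrA ler_wpM2r // invr_ge0 ltW.
have -> : forall a b : R, a * b + b = (1 + a) * b by move=> a b; ring.
by apply: ler_wpM2l => //; rewrite addr_ge0.
Qed.

Lemma bin2R (R : realType) m : (1 <= m)%N -> 2 * ('C(m,2)%:R : R) = m%:R * (m%:R - 1).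
Proof.
move=> hm; have := mul_bin_diag m 1; rewrite bin1 => /(congr1 (fun k => k%:R : R)).
rewrite !natrM => <-; congr (_ * _); rewrite -subn1 natrB //.
Qed.

Lemma claim2 (R : realType) n r x : (2 * r <= n)%N -> (2 <= x)%N -> (x <= n)%N -> (1 <= r)%N ->
  qr R n r x <= 1 - 2 * (r%:R / n%:R) * (1 - r%:R / n%:R).
Proof.
move=> hr2 h2 hx hr1.
have hrn : (r <= n)%N by lia.
apply: le_trans (qr_num_le _ _ _ x hrn) _.
have hD : 0 < ('C(n,x)%:R : R) by rewrite ltr0n bin_gt0.
have hD2 : 0 < ('C(n,2)%:R : R) by rewrite ltr0n bin_gt0; lia.
apply: (@le_trans _ _ (('C(r,2) + 'C(n-r,2))%:R / 'C(n,2)%:R)).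
  rewrite ler_pdivrMr // mulrAC ler_pdivlMr // -!natrM ler_nat mulnDl mulnDl.
  by apply: leq_add; apply: bin_mono2 => //; lia.
rewrite ler_pdivrMr // natrD.
have e1 := bin2R R r hr1.
have e2 := bin2R R (n - r) ltac:(lia).
have e3 := bin2R R n ltac:(lia).
rewrite natrB // in e2.
set t := r%:R / n%:R.
have hn : 0 < n%:R :> R by rewrite ltr0n; lia.
have ht : (r%:R : R) = t * n%:R by rewrite /t mulrVK ?unitfE ?pnatr_eq0 -?lt0n //; lia.
have ht0 : 0 <= t by rewrite /t divr_ge0 ?ler0n.
have ht1 : t <= 1 by rewrite /t ler_pdivrMr // mul1r ler_nat.
have hh : 0 <= n%:R * (t * (1 - t)) :> R by apply: mulr_ge0; [exact: ltW | apply: mulr_ge0 => //; rewrite subr_ge0].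
rewrite ht in e1 e2.
nra.
Qed.

Lemma bern (R : realType) (s : R) k : 0 <= s -> s <= 1 ->
  (1 - s) ^+ k <= 1 - k%:R * s + (k%:R ^+ 2 * s ^+ 2) / 2.
Proof.
move=> hs0 hs1; elim: k => [|k IH]; first by rewrite expr0 mul0r subr0 expr0n /= mul0r mul0r addr0.
have h := ler_wpM2l (_ : 0 <= 1 - s) IH; have {h} h := h ltac:(lra).
rewrite exprS; apply: le_trans h _.
rewrite -natr1.
have hk : 0 <= (k%:R : R) by rewrite ler0n.
have hk2 : 0 <= (k%:R : R) ^+ 2 * s ^+ 3 by rewrite mulr_ge0 ?exprn_ge0.
have hs2 : 0 <= s ^+ 2 by rewrite exprn_ge0.
rewrite -subr_ge0.
set L := (X in 0 <= X).
have -> : L = (s ^+ 2 + (k%:R : R) ^+ 2 * s ^+ 3) / 2 by rewrite /L; field.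
by rewrite divr_ge0 // addr_ge0.
Qed.

Lemma claim3pt (R : realType) n r x : (2 * r <= n)%N -> (2 <= x)%N -> (x <= n)%N -> (1 <= r)%N ->
  qr R n r x <= 1 - r%:R / n%:R * x%:R + (r%:R ^+ 2) / ((n - r)%:R ^+ 2)
                + 2^-1 * ((r%:R ^+ 2) / (n%:R ^+ 2)) * (x%:R ^+ 2).
Proof.
move=> hr2 h2 hx hr1.
have h1 := claim1 R n r x hr2 hx hr1.
have hN : 0 < ((n - r)%:R : R) by rewrite ltr0n; lia.
have hn : 0 < (n%:R : R) by rewrite ltr0n; lia.
have ha0 : 0 <= r%:R / (n - r)%:R :> R by rewrite divr_ge0 ?ler0n.
have ha1 : r%:R / (n - r)%:R <= 1 :> R by rewrite ler_pdivrMr // mul1r ler_nat; lia.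
have hc : r%:R ^+ x / (n - r)%:R ^+ x <= (r%:R ^+ 2) / ((n - r)%:R ^+ 2) :> R.
  by rewrite -!expr_div_n; apply: ler_wiXn2l.
have hc0 : 0 <= r%:R ^+ x / (n - r)%:R ^+ x :> R by rewrite -expr_div_n exprn_ge0.
have hs0 : 0 <= x%:R / n%:R :> R by rewrite divr_ge0 ?ler0n.
have hs1 : x%:R / n%:R <= 1 :> R by rewrite ler_pdivrMr // mul1r ler_nat.
have hP0 : 0 <= (1 - x%:R / n%:R) ^+ r :> R by rewrite exprn_ge0 // subr_ge0.
have hP1 : (1 - x%:R / n%:R) ^+ r <= 1 :> R by rewrite exprn_ile1 // ?subr_ge0 // lerBlDr lerDl.
have hb := bern R (x%:R / n%:R) r hs0 hs1.
apply: le_trans h1 _.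
set c := r%:R ^+ x / (n - r)%:R ^+ x in hc hc0 *.
set P := (1 - x%:R / n%:R) ^+ r in hP0 hP1 hb *.
have hcP : c * P <= c by rewrite ler_piMr.
have -> : 1 - r%:R / n%:R * x%:R + r%:R ^+ 2 / (n - r)%:R ^+ 2 + 2^-1 * (r%:R ^+ 2 / n%:R ^+ 2) * x%:R ^+ 2
  = (1 - r%:R * (x%:R / n%:R) + (r%:R ^+ 2 * (x%:R / n%:R) ^+ 2) / 2) + r%:R ^+ 2 / (n - r)%:R ^+ 2 :> R.
  by field; rewrite (gt_eqF hN) (gt_eqF hn).
lra.
Qed.

Lemma claim4pt (R : realType) n r x : (2 * r <= n)%N -> (2 <= x)%N -> (x <= n)%N -> (1 <= r)%N ->
  qr R n r x <= expR (- (2 * (r%:R / n%:R) * (1 - r%:R / n%:R))).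
Proof.
move=> hr2 h2 hx hr1; apply: le_trans (claim2 R n r x hr2 h2 hx hr1) _.
by have := expR_ge1Dx (- (2 * (r%:R / n%:R) * (1 - r%:R / n%:R)) : R).
Qed.

Lemma split2 (R : realType) n (F : 'I_n.+1 -> R) :
  \sum_(i < n.+1) F i = \sum_(i < n.+1 | (i < 2)%N) F i + \sum_(i < n.+1 | (2 <= i)%N) F i.
Proof.
rewrite (bigID (fun i : 'I_n.+1 => (i < 2)%N)) /=; congr (_ + _).
by apply: eq_bigl => i; rewrite -leqNgt.
Qed.

Theorem mainTheorem12 (R : realType) (n r : nat)
  (hn : (2 <= n)%N) (hr1 : (1 <= r)%N) (hr2 : (2 * r <= n)%N) :
  (forall x : nat, (2 <= x)%N -> (x <= n)%N ->
     qr R n r x <= (1 + (r%:R ^+ x) / ((n - r)%:R ^+ x)) * (1 - x%:R / n%:R) ^+ r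
  /\ qr R n r x <= 1 - 2 * (r%:R / n%:R) * (1 - r%:R / n%:R))
  /\
  (forall p : 'I_n.+1 -> R, is_law p ->
     \sum_(i < n.+1) p i * qr R n r i
       <= 1 - r%:R / n%:R * (\sum_(i < n.+1 | (2 <= i)%N) p i * i%:R)
            + (r%:R ^+ 2) / ((n - r)%:R ^+ 2) * (\sum_(i < n.+1 | (2 <= i)%N) p i)
            + 2^-1 * ((r%:R ^+ 2) / (n%:R ^+ 2))
                * (\sum_(i < n.+1 | (2 <= i)%N) p i * (i%:R ^+ 2))
  /\ \sum_(i < n.+1) p i * qr R n r i
       <= (\sum_(i < n.+1 | (i < 2)%N) p i)
          + expR (- (2 * (r%:R / n%:R) * (1 - r%:R / n%:R)))
              * (\sum_(i < n.+1 | (2 <= i)%N) p i)).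
Proof.
split.
  move=> x h2 hx; split; [exact: claim1 | exact: claim2].
move=> p [hp0 hp1].
have hS0 : \sum_(i < n.+1 | (i < 2)%N) p i * qr R n r i <= \sum_(i < n.+1 | (i < 2)%N) p i.
  by apply: ler_sum => i _; rewrite -[leRHS]mulr1 ler_wpM2l ?qr_le1.
have h1 := split2 R n p; rewrite hp1 in h1.
rewrite split2; split.
  set g := fun i : nat => 1 - r%:R / n%:R * i%:R + (r%:R ^+ 2) / ((n - r)%:R ^+ 2)
                + 2^-1 * ((r%:R ^+ 2) / (n%:R ^+ 2)) * (i%:R ^+ 2) : R.
  have hS1 : \sum_(i < n.+1 | (2 <= i)%N) p i * qr R n r i
      <= \sum_(i < n.+1 | (2 <= i)%N) p i * g i.
    apply: ler_sum => i hi; apply: ler_wpM2l => //; apply: claim3pt => //.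
    by rewrite -ltnS ltn_ord.
  have E : \sum_(i < n.+1 | (2 <= i)%N) p i * g i
      = \sum_(i < n.+1 | (2 <= i)%N) p i - r%:R / n%:R * (\sum_(i < n.+1 | (2 <= i)%N) p i * i%:R)
            + (r%:R ^+ 2) / ((n - r)%:R ^+ 2) * (\sum_(i < n.+1 | (2 <= i)%N) p i)
            + 2^-1 * ((r%:R ^+ 2) / (n%:R ^+ 2))
                * (\sum_(i < n.+1 | (2 <= i)%N) p i * (i%:R ^+ 2)).
    rewrite !mulr_sumr -sumrB -!big_split /=; apply: eq_bigr => i _; rewrite /g; ring.
  apply: le_trans (lerD hS0 hS1) _; rewrite E; lra.
have hS1 : \sum_(i < n.+1 | (2 <= i)%N) p i * qr R n r i
    <= \sum_(i < n.+1 | (2 <= i)%N) p i * expR (- (2 * (r%:R / n%:R) * (1 - r%:R / n%:R))).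
  apply: ler_sum => i hi; apply: ler_wpM2l => //; apply: claim4pt => //.
  by rewrite -ltnS ltn_ord.
by apply: le_trans (lerD hS0 hS1) _; rewrite -mulr_suml [X in _ + X <= _]mulrC.
Qed.
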